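(* Let $n\ge3$ and let $\mathbf A_1,\mathbf A_2,\mathbf A_3,\mathbf A_4$ be algebras whose only operations are ternary operations $t_1,\dots,t_{n-1}$. Suppose that for $j=1,2,3$ there is an element $0\in A_j$ with $t_h(0,y,z)=0$ for $h=1,\dots,n-2$ and $t_h(x,y,0)=0$ for $h=2,\dots,n-1$ (for all $x,y,z\in A_j$), and that in $\mathbf A_4$, $t_1$ is the projection onto the first coordinate, $t_{n-1}$ is the projection onto the third coordinate, and $t_h(x,y,x)=x$ for $h=2,\dots,n-2$. Fix $a,d\in A_4$ and let $B=B(a,d)$ be the set of elements of $E=A_1\times A_2\times A_3\times A_4$ having at least one of the forms $(\ast,0,\ast,a)$, $(0,0,\ast,\ast)$, $(0,\ast,\ast,d)$, $(\ast,\ast,0,\ast)$, where $\ast$ denotes an arbitrary element of the corresponding factor. Then $B$ is the universe of a subalgebra of $\mathbf A_1\times\mathbf A_2\times\mathbf A_3\times\mathbf A_4$. *)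

(* Defs.v *)
From mathcomp Require Import all_boot.
Set Implicit Arguments. Unset Strict Implicit. Unset Printing Implicit Defensive.

(* An algebra with ternary operations t_1, ..., t_{n-1} is represented by a
   carrier type A and a family t : nat -> A -> A -> A -> A, of which only the
   indices 1 <= h <= n-1 are meaningful. *)
Definition ternops (A : Type) := nat -> A -> A -> A -> A.

Definition prod4_op (A1 A2 A3 A4 : Type)
  (t1 : ternops A1) (t2 : ternops A2) (t3 : ternops A3) (t4 : ternops A4)
  (h : nat) (x y z : A1 * A2 * A3 * A4) : A1 * A2 * A3 * A4 :=
  let '(x1, x2, x3, x4) := x in
  let '(y1, y2, y3, y4) := y in
  let '(z1, z2, z3, z4) := z in
  (t1 h x1 y1 z1, t2 h x2 y2 z2, t3 h x3 y3 z3, t4 h x4 y4 z4).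

Definition inB (A1 A2 A3 A4 : Type) (o1 : A1) (o2 : A2) (o3 : A3) (a d : A4)
  (x : A1 * A2 * A3 * A4) : Prop :=
  let '(x1, x2, x3, x4) := x in
  (x2 = o2 /\ x4 = a) \/ (x1 = o1 /\ x2 = o2) \/ (x1 = o1 /\ x4 = d) \/ x3 = o3.

(* Main.v *)
Require Import Defs.
From mathcomp Require Import all_boot zify.

Theorem theorem3p2 (n : nat) (hn : 3 <= n)
  (A1 A2 A3 A4 : Type)
  (t1 : ternops A1) (t2 : ternops A2) (t3 : ternops A3) (t4 : ternops A4)
  (o1 : A1) (o2 : A2) (o3 : A3)
  (H1l : forall h, 1 <= h <= n - 2 -> forall y z, t1 h o1 y z = o1)
  (H1r : forall h, 2 <= h <= n - 1 -> forall x y, t1 h x y o1 = o1)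
  (H2l : forall h, 1 <= h <= n - 2 -> forall y z, t2 h o2 y z = o2)
  (H2r : forall h, 2 <= h <= n - 1 -> forall x y, t2 h x y o2 = o2)
  (H3l : forall h, 1 <= h <= n - 2 -> forall y z, t3 h o3 y z = o3)
  (H3r : forall h, 2 <= h <= n - 1 -> forall x y, t3 h x y o3 = o3)
  (H4first : forall x y z, t4 1 x y z = x)
  (H4last : forall x y z, t4 (n - 1) x y z = z)
  (H4mid : forall h, 2 <= h <= n - 2 -> forall x y, t4 h x y x = x)
  (a d : A4) :
  forall h, 1 <= h <= n - 1 ->
  forall x y z : A1 * A2 * A3 * A4,
    inB o1 o2 o3 a d x -> inB o1 o2 o3 a d y -> inB o1 o2 o3 a d z ->
    inB o1 o2 o3 a d (prod4_op t1 t2 t3 t4 h x y z).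
Proof.
move=> h /andP[h1 hn1] [[[x1 x2] x3] x4] [[[y1 y2] y3] y4] [[[z1 z2] z3] z4] /= Hx _ Hz.
case: (eqVneq h 1) => [Eh|h1'].
  have hl : 1 <= h <= n - 2 by apply/andP; lia.
  subst h; rewrite H4first.
  case: Hx => [[-> ->]|[[-> ->]|[[-> ->]|->]]];
    rewrite ?(H1l _ hl) ?(H2l _ hl) ?(H3l _ hl); tauto.
case: (eqVneq h (n - 1)) => [Eh|hn1'].
  have hr : 2 <= h <= n - 1 by apply/andP; lia.
  rewrite Eh in hr *; rewrite H4last.
  case: Hz => [[-> ->]|[[-> ->]|[[-> ->]|->]]];
    rewrite ?(H1r _ hr) ?(H2r _ hr) ?(H3r _ hr); tauto.
have hl : 1 <= h <= n - 2 by apply/andP; lia.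
have hr : 2 <= h <= n - 1 by apply/andP; lia.
have hm : 2 <= h <= n - 2 by apply/andP; lia.
case: Hx => [[-> ->]|[[-> ->]|[[-> ->]|->]]];
case: Hz => [[-> ->]|[[-> ->]|[[-> ->]|->]]];
  rewrite ?(H1l _ hl) ?(H2l _ hl) ?(H3l _ hl) ?(H1r _ hr) ?(H2r _ hr) ?(H3r _ hr) ?(H4mid _ hm); tauto.
Qed.
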